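(* Let $n,r\ge 1$ and let $D=\{(\mathbf s_1,\mathbf t_1),\dots,(\mathbf s_r,\mathbf t_r)\}\subset \mathbb F_2^n\times\mathbb F_2^n$ be a data set, with $\mathbf s_j=(s_{j,1},\dots,s_{j,n})$ and $\mathbf t_j=(t_{j,1},\dots,t_{j,n})$. Fix a gene index $i\in\{1,\dots,n\}$. Put $$f_i=\sum_{j=1}^r t_{j,i}\prod_{e=1}^n\bigl(1-(x_e-s_{j,e})\bigr),\qquad p=\prod_{j=1}^r\Bigl(1-\prod_{e=1}^n\bigl(1-(x_e-s_{j,e})\bigr)\Bigr),$$ and let $I=\langle p\rangle$ in $R=\mathbb F_2[x_1,\dots,x_n]/\langle x_e^2-x_e: 1\le e\le n\rangle$; this $I$ is the ideal of Boolean polynomials vanishing on $\{\mathbf s_1,\dots,\mathbf s_r\}$, so $f_i+I$ is the set of Boolean functions $h$ with $h(\mathbf s_j)=t_{j,i}$ for all $j$. Introduce indeterminates $b_H$, $H\subseteq[n]$, let $g=\sum_{H\subseteq[n]}b_H\prod_{l\in H}x_l$, and write the reduction of $f_i+g\,p$ modulo $\langle x_e^2-x_e\rangle$ as $\sum_{S\subseteq[n]}W_S\prod_{l\in S}x_l$, where each $W_S=W_S(b_H,\mathbf s_j,\mathbf t_j)$ is a polynomial (affine-linear over $\mathbb F_2$) in the $b_H$. Consider the ring homomorphism $$\Phi:\overline{\mathbb F}_2[\{c_S:S\subseteq[n]\}]\to\overline{\mathbb F}_2[\{b_H:H\subseteq[n]\}],\qquad c_S\mapsto W_S .$$ Then $\ker(\Phi)$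 is the ideal of all polynomials that fit the data set $D$ (i.e. the vanishing ideal of the set of coefficient vectors $(W_S)_S$ obtained as the $b_H$ vary); in particular, the $\mathbb F_2$-rational points of the variety $\mathbb V(\ker\Phi)\subseteq\overline{\mathbb F}_2^{\,2^n}$, identified with Boolean polynomials via $(c_S)_{S\subseteq[n]}\leftrightarrow\sum_S c_S\prod_{l\in S}x_l$, are exactly the models fitting $D$, namely the elements of $f_i+I$.
   Context: Boolean functions $\mathbb F_2^n\to\mathbb F_2$ are identified with elements of $R=\mathbb F_2[x_1,\dots,x_n]/\langle x_e^2-x_e\rangle$, each written uniquely as $\sum_{S\subseteq[n]}c_S\prod_{l\in S}x_l$ with $c_S\in\mathbb F_2$, and hence with vectors $(c_S)_{S\subseteq[n]}\in\mathbb F_2^{2^n}$. $[n]=\{1,\dots,n\}$. $\overline{\mathbb F}_2$ is the algebraic closure of $\mathbb F_2$. A model for gene $i$ ''fits'' $D$ if it maps $\mathbf s_j$ to $t_{j,i}$ for every $j$. *)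

(* Defs.v *)
From HB Require Import structures.
From mathcomp Require Import all_boot all_order all_algebra.
From mathcomp Require Import mpoly.
Set Implicit Arguments. Unset Strict Implicit. Unset Printing Implicit Defensive.
Import Order.TTheory GRing.Theory.
Local Open Scope ring_scope.

(* Subsets H of [n] = 'I_n are {set 'I_n}; the 2^n variables indexed by
   subsets are numbered via enum_rank. *)
Definition Nsub (n : nat) : nat := #|{: {set 'I_n}}|.
Definition sidx (n : nat) (H : {set 'I_n}) : 'I_(Nsub n) := enum_rank H.
Definition sval_of (n : nat) (k : 'I_(Nsub n)) : {set 'I_n} := enum_val k.

Definition emb2 (A : nzRingType) (a : 'F_2) : A := (val a)%:R.

Definition xmon (A : comNzRingType) (n : nat) (S : {set 'I_n}) : {mpoly A[n]} :=
  \prod_(l in S) 'X_l.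

(* Reduction modulo <x_e^2 - x_e>: since x_e^k = x_e for k >= 1, the monomial
   with exponent vector m reduces to xmon (support of m).  [red q S] is the
   coefficient of xmon S in the (multilinear) reduction of q. *)
Definition red (A : comNzRingType) (n : nat) (q : {mpoly A[n]}) (S : {set 'I_n}) : A :=
  \sum_(m <- msupp q | [set l : 'I_n | (m l != 0)%N] == S) q@_m.

Definition chi (A : comNzRingType) (n r : nat) (s : 'I_r -> 'I_n -> 'F_2) (j : 'I_r)
  : {mpoly A[n]} :=
  \prod_(e < n) (1 - ('X_e - (emb2 A (s j e))%:MP)).

Definition fpol (A : comNzRingType) (n r : nat) (s t : 'I_r -> 'I_n -> 'F_2) (i : 'I_n)
  : {mpoly A[n]} :=
  \sum_(j < r) (emb2 A (t j i))%:MP * chi A s j.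

Definition ppol (A : comNzRingType) (n r : nat) (s : 'I_r -> 'I_n -> 'F_2)
  : {mpoly A[n]} :=
  \prod_(j < r) (1 - chi A s j).

Definition gpol (K : fieldType) (n : nat) : {mpoly {mpoly K[Nsub n]}[n]} :=
  \sum_(H : {set 'I_n}) ('X_(sidx H) : {mpoly K[Nsub n]})%:MP * xmon {mpoly K[Nsub n]} H.

Definition Wpol (K : fieldType) (n r : nat) (s t : 'I_r -> 'I_n -> 'F_2) (i : 'I_n)
  (k : 'I_(Nsub n)) : {mpoly K[Nsub n]} :=
  red (fpol {mpoly K[Nsub n]} s t i + gpol K n * ppol {mpoly K[Nsub n]} s) (sval_of k).

(* Phi : K[c_S] -> K[b_H], c_S |-> W_S (c_S is the variable 'X_(sidx S)). *)
Definition Phi (K : fieldType) (n r : nat) (s t : 'I_r -> 'I_n -> 'F_2) (i : 'I_n)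
  (P : {mpoly K[Nsub n]}) : {mpoly K[Nsub n]} :=
  P \mPo [tuple Wpol K s t i k | k < Nsub n].

Definition boolfun (n : nat) (c : {set 'I_n} -> 'F_2) (x : 'I_n -> 'F_2) : 'F_2 :=
  \sum_(S : {set 'I_n}) c S * \prod_(l in S) x l.

Definition fits (n r : nat) (s t : 'I_r -> 'I_n -> 'F_2) (i : 'I_n)
  (h : ('I_n -> 'F_2) -> 'F_2) : Prop :=
  forall j : 'I_r, h (s j) = t j i.

(* Main.v *)
Require Import Defs.
From HB Require Import structures.
From mathcomp Require Import all_boot all_order all_algebra.
From mathcomp Require Import mpoly.
Import GRing.Theory.
Local Open Scope ring_scope.
Set Implicit Arguments. Unset Strict Implicit.

Lemma F2c (a : 'F_2) : a = 0 \/ a = 1.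
Proof. case: a => [[|[|m]] Hm]; [left|right|]; try by apply/val_inj. exfalso. move: Hm. by rewrite /=. Qed.
Lemma e2 (a : 'F_2) : emb2 'F_2 a = a. Proof. by case: (F2c a) => ->; apply/val_inj. Qed.
Lemma F2_11 : (1 + 1 : 'F_2) = 0. Proof. by apply/val_inj. Qed.
Lemma F2_idem (a : 'F_2) : a * a = a. Proof. by case: (F2c a) => ->; rewrite ?mulr0 ?mulr1. Qed.

Lemma emb0 (A : comNzRingType) : emb2 A 0 = 0. Proof. by []. Qed.
Lemma emb1 (A : comNzRingType) : emb2 A 1 = 1. Proof. by []. Qed.
Lemma emb_idem (A : comNzRingType) a : emb2 A a * emb2 A a = emb2 A a.
Proof. by case: (F2c a) => ->; rewrite ?emb0 ?emb1 ?mulr0 ?mulr1. Qed.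

Definition embm (A : comNzRingType) (h2 : 2%:R = 0 :> A) : 'F_2 -> A := emb2 A.

Lemma embm_add (A : comNzRingType) (h2 : 2%:R = 0 :> A) : nmod_morphism (embm h2).
Proof.
split => // a b; rewrite /embm.
case: (F2c a) => ->; case: (F2c b) => ->; rewrite ?add0r ?addr0 ?emb0 ?add0r ?addr0 //;
by rewrite F2_11 emb0 emb1 -h2.
Qed.
Lemma embm_mul (A : comNzRingType) (h2 : 2%:R = 0 :> A) : monoid_morphism (embm h2).
Proof.
split => // a b; rewrite /embm.
by case: (F2c a) => ->; case: (F2c b) => ->; rewrite ?mul0r ?mulr0 ?mulr1 ?emb0 ?emb1 ?mul0r ?mulr0 ?mulr1.
Qed.
HB.instance Definition _ (A : comNzRingType) (h2 : 2%:R = 0 :> A) :=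
  GRing.isNmodMorphism.Build 'F_2 A (embm h2) (embm_add h2).
HB.instance Definition _ (A : comNzRingType) (h2 : 2%:R = 0 :> A) :=
  GRing.isMonoidMorphism.Build 'F_2 A (embm h2) (embm_mul h2).

Lemma embmE (A : comNzRingType) (h2 : 2%:R = 0 :> A) a : embm h2 a = emb2 A a. Proof. by []. Qed.

Lemma test (A : comNzRingType) (h2 : 2%:R = 0 :> A) (a b: 'F_2) : embm h2 (a * b - 1) = embm h2 a * embm h2 b - 1.
Proof. by rewrite rmorphB rmorphM rmorph1. Qed.

Section Vals.
Variables (n r : nat) (s t : 'I_r -> 'I_n -> 'F_2) (i : 'I_n).
Variables (C A : comNzRingType) (phi : {rmorphism C -> A}) (h2 : 2%:R = 0 :> A).

Definition isdat (y : 'I_n -> 'F_2) (j : 'I_r) : bool := [forall e, y e == s j e].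
Definition fval (y : 'I_n -> 'F_2) : 'F_2 := \sum_(j < r) t j i * (isdat y j)%:R.
Definition pval (y : 'I_n -> 'F_2) : 'F_2 := \prod_(j < r) (1 - (isdat y j)%:R).

Lemma phi_emb a : phi (emb2 C a) = emb2 A a.
Proof. by rewrite /emb2 rmorph_nat. Qed.

Lemma mmapCemb (x : 'I_n -> A) a : mmap phi x ((emb2 C a)%:MP) = emb2 A a.
Proof. rewrite mmapC; change (phi (emb2 C a) = emb2 A a); exact: phi_emb. Qed.

Lemma mmapXU (x : 'I_n -> A) e : mmap phi x 'X_e = x e.
Proof. by rewrite mmapX mmap1U. Qed.

Lemma xmon_val (x : 'I_n -> A) S : mmap phi x (xmon C S) = \prod_(l in S) x l.
Proof. by rewrite /xmon rmorph_prod /=; apply: eq_bigr => l _; rewrite mmapXU. Qed.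

Lemma chi_val (y : 'I_n -> 'F_2) j :
  mmap phi (fun e => emb2 A (y e)) (chi C s j) = (isdat y j)%:R.
Proof.
rewrite /chi rmorph_prod /=.
under eq_bigr do rewrite rmorphB rmorph1 rmorphB /= mmapXU mmapCemb.
rewrite /isdat; case: (boolP [forall e, y e == s j e]) => Hf.
  by rewrite big1 // => e _; rewrite (eqP (forallP Hf e)) subrr subr0.
case/forallPn: Hf => e He; rewrite (bigD1 e) //=.
suff -> : 1 - (emb2 A (y e) - emb2 A (s j e)) = 0 by rewrite mul0r.
move: He; case: (F2c (y e)) => ->; case: (F2c (s j e)) => -> //= _;
  rewrite ?emb0 ?emb1 ?subr0 ?sub0r ?opprK ?subrr //;
  by rewrite -h2.
Qed.

Lemma f_val (y : 'I_n -> 'F_2) :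
  mmap phi (fun e => emb2 A (y e)) (fpol C s t i) = emb2 A (fval y).
Proof.
rewrite /fpol /fval -embmE rmorph_sum rmorph_sum; apply: eq_bigr => j _.
by rewrite !rmorphM /= mmapCemb chi_val rmorph_nat.
Qed.

Lemma p_val (y : 'I_n -> 'F_2) :
  mmap phi (fun e => emb2 A (y e)) (ppol C s) = emb2 A (pval y).
Proof.
rewrite /ppol /pval -embmE rmorph_prod rmorph_prod; apply: eq_bigr => j _.
by rewrite !rmorphB !rmorph1 /= chi_val rmorph_nat.
Qed.

End Vals.
Definition ssupp n (m : 'X_{1..n}) : {set 'I_n} := [set l : 'I_n | (m l != 0)%N].

Lemma factE (C A : comNzRingType) (phi : {rmorphism C -> A}) n (q : {mpoly C[n]})
  (x : 'I_n -> A) (hx : forall l, x l * x l = x l) :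
  mmap phi x q = \sum_(S : {set 'I_n}) phi (red q S) * \prod_(l in S) x l.
Proof.
have H1 m: mmap1 x m = \prod_(l in ssupp m) x l.
  rewrite /mmap1 (bigID (fun l => m l != 0%N)) /= [X in _ * X]big1 ?mulr1.
    apply: eq_big => l; first by rewrite inE.
    move=> Hl; elim: (m l) Hl => // k IH _; case: k IH => [|k] IH; first by rewrite expr1.
    by rewrite exprS IH // hx.
  by move=> l; rewrite negbK => /eqP ->; rewrite expr0.
rewrite /mmap.
under [RHS]eq_bigr do rewrite /red rmorph_sum mulr_suml big_mkcond.
rewrite exchange_big /=; apply: eq_bigr => m _.
rewrite -big_mkcond /= (big_pred1 (ssupp m)); first by rewrite H1.
by move=> S; rewrite /= eq_sym.
Qed.

Lemma factU n (A : comNzRingType) (a a' : {set 'I_n} -> A) :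
  (forall T : {set 'I_n}, \sum_S a S * \prod_(l in S) ((l \in T)%:R : A)
      = \sum_S a' S * \prod_(l in S) ((l \in T)%:R : A)) -> forall S, a S = a' S.
Proof.
move=> H.
have P (T S : {set 'I_n}) : \prod_(l in S) ((l \in T)%:R : A) = (S \subset T)%:R.
  case: (boolP (S \subset T)) => HS.
    by rewrite big1 // => l lS; rewrite (subsetP HS l lS).
  case/subsetPn: HS => l lS lT. by rewrite (bigD1 l) //= (negbTE lT) mul0r.
suff: forall k (S : {set 'I_n}), (#|S| < k)%N -> a S - a' S = 0.
  by move=> h S; apply/eqP; rewrite -subr_eq0; apply/eqP; apply (h #|S|.+1).
elim=> // k IH S HS.
have := H S. under eq_bigr do rewrite P. under [in RHS]eq_bigr do rewrite P.
move/eqP; rewrite -subr_eq0 -sumrB (bigD1 S) //= subxx mulr1 mulr1 big1 ?addr0.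
  by move/eqP.
move=> T HT. case: (boolP (T \subset S)) => HTS; last by rewrite mulr0 mulr0 subrr.
rewrite mulr1 mulr1 IH //.
have: T \proper S by rewrite properEneq HT HTS.
by move/proper_card => h; exact: leq_trans h HS.
Qed.
Lemma poly_zero (K : closedFieldType) (r : {poly K}) : (forall x, r.[x] = 0) -> r = 0.
Proof.
move=> H; apply/eqP; apply/negP => /negP rn0.
have hs : size (r * 'X - 1) = (size r).+1.
  rewrite size_addl ?size_mulX // size_opp size_poly1 ltnS lt0n size_poly_eq0 //.
have : size (r * 'X - 1) != 1%N by rewrite hs eqSS size_poly_eq0.
case/closed_rootP => x /rootP; rewrite !hornerE H mul0r sub0r => /eqP.
by rewrite oppr_eq0 oner_eq0.
Qed.

Definition ext (K : Type) k (v : 'I_k -> K) (x : K) (i : 'I_k.+1) : K :=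
  if insub (val i) is Some i' then v i' else x.

Lemma ext_widen (K : Type) k (v : 'I_k -> K) x (i : 'I_k) : ext v x (widen_ord (leqnSn k) i) = v i.
Proof. by rewrite /ext /= insubT //= => h; congr v; apply/val_inj. Qed.
Lemma ext_max (K : Type) k (v : 'I_k -> K) x : ext v x ord_max = x.
Proof. by rewrite /ext insubN //= ltnn. Qed.

Lemma mpoly_zero (K : closedFieldType) k (p : {mpoly K[k]}) : (forall v, p.@[v] = 0) -> p = 0.
Proof.
elim: k p => [|k IH] p H.
  apply/mpolyP => m0; rewrite mcoeff0.
  have E: forall m : 'X_{1..0}, m = m0 by move=> m; apply/mnmP => -[].
  have := H (fun _ => 0); rewrite mevalE => <-.
  rewrite {1}(mpolyE p) raddf_sum /=; apply: eq_bigr => m _.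
  by rewrite mcoeffZ mcoeffX (E m) eqxx big_ord0.
pose tr (m : 'X_{1..k.+1}) : 'X_{1..k} := [multinom m (widen_ord (leqnSn k) i) | i < k].
pose q j := \sum_(m <- msupp p | m ord_max == j) p@_m *: 'X_[tr m].
have Hq j : q j = 0.
  apply: IH => v.
  pose R := \sum_(m <- msupp p) (p@_m * \prod_(i < k) v i ^+ m (widen_ord (leqnSn k) i)) *: 'X^(m ord_max).
  have HR : R = 0.
    apply: poly_zero => x; rewrite -(H (ext v x)) mevalE /R horner_sum; apply: eq_bigr => m _.
    rewrite hornerZ hornerXn big_ord_recr /= ext_max -mulrA; congr (_ * (_ * _)).
    by apply: eq_bigr => i _; rewrite ext_widen.
  have := congr1 (fun r : {poly K} => r`_j) HR; rewrite coef0 /R coef_sum => <-.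
  rewrite raddf_sum /= big_mkcond /=; apply: eq_bigr => m _.
  rewrite coefZ coefXn eq_sym; case: eqP => _; rewrite ?mulr0 ?mulr1 //.
  rewrite mevalZ mevalX; congr (_ * _); apply: eq_bigr => i _; by rewrite mnmE.
apply/mpolyP => m0; rewrite mcoeff0.
have := congr1 (fun r => r@_(tr m0)) (Hq (m0 ord_max)); rewrite mcoeff0 raddf_sum /=.
have E (m : 'X_{1..k.+1}) : ((m ord_max == m0 ord_max) && (tr m == tr m0)) = (m == m0).
  apply/idP/eqP => [/andP[/eqP h1 /eqP h2]|->]; last by rewrite !eqxx.
  apply/mnmP => i; case: (unliftP ord_max i) => [i'|] ->; last by [].
  have := congr1 (fun mm : 'X_{1..k} => mm i') h2; rewrite !mnmE.
  by have -> : lift ord_max i' = widen_ord (leqnSn k) i' by apply/val_inj; rewrite /= /bump leqNgt ltn_ord.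
under eq_bigr do rewrite mcoeffZ mcoeffX.
rewrite -big_filter.
case: (boolP (m0 \in msupp p)) => Hm; last by rewrite (memN_msupp_eq0 Hm).
rewrite (bigD1_seq m0) ?filter_uniq ?msupp_uniq //=; last by rewrite mem_filter eqxx.
rewrite eqxx mulr1 big1_seq ?addr0 // => m /andP[Hne]; rewrite mem_filter => /andP[Hmax _].
case: eqP => h; last by rewrite mulr0.
by move: Hne; rewrite -E Hmax h eqxx.
Qed.

Require Import Stdlib.Logic.FunctionalExtensionality.

Section Data.
Variables (n r : nat) (s t : 'I_r -> 'I_n -> 'F_2) (hs : injective s) (i : 'I_n).

Lemma isdat_s j j' : isdat s (s j) j' = (j == j').
Proof.
apply/forallP/eqP => [H|->]; last by move=> e.
apply: hs; apply: functional_extensionality => e; exact/eqP/H.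
Qed.

Lemma isdat_eq y j : isdat s y j -> y = s j.
Proof. move=> H; apply: functional_extensionality => e; exact/eqP/(forallP H). Qed.

Lemma fval_s j : fval s t i (s j) = t j i.
Proof.
rewrite /fval (bigD1 j) //= isdat_s eqxx mulr1 big1 ?addr0 // => j' Hj'.
by rewrite isdat_s eq_sym (negbTE Hj') mulr0.
Qed.

Lemma pval_s j : pval s (s j) = 0.
Proof. by rewrite /pval (bigD1 j) //= isdat_s eqxx subrr mul0r. Qed.

Lemma pval_nd y : ~~ [exists j, isdat s y j] -> pval s y = 1.
Proof.
move=> H; rewrite /pval big1 // => j _.
have -> : isdat s y j = false by apply/negP => Hj; move/negP: H; apply; apply/existsP; exists j.
by rewrite subr0.
Qed.

Lemma h2F : 2%:R = 0 :> 'F_2. Proof. by apply/val_inj. Qed.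

Lemma meval_F2 (q : {mpoly 'F_2[n]}) y :
  q.@[y] = mmap idfun (fun e => emb2 'F_2 (y e)) q.
Proof. by rewrite -[RHS]/(meval _ q); apply: meval_eq => e; rewrite e2. Qed.

Lemma fF2 y : (fpol 'F_2 s t i).@[y] = fval s t i y.
Proof. by rewrite meval_F2 (f_val s t i idfun h2F) e2. Qed.

Lemma pF2 y : (ppol 'F_2 s).@[y] = pval s y.
Proof. by rewrite meval_F2 (p_val s idfun h2F) e2. Qed.

Lemma evalE_F2 (q : {mpoly 'F_2[n]}) y :
  q.@[y] = \sum_(S : {set 'I_n}) red q S * \prod_(l in S) y l.
Proof. by rewrite -[LHS]/(mmap idfun y q) (factE idfun q (fun l => F2_idem (y l))). Qed.

Definition hpol (c : {set 'I_n} -> 'F_2) : {mpoly 'F_2[n]} :=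
  \sum_(S : {set 'I_n}) (c S)%:MP * xmon 'F_2 S.

Lemma hpol_val c y : (hpol c).@[y] = boolfun c y.
Proof.
rewrite /hpol /boolfun rmorph_sum; apply: eq_bigr => S _.
by rewrite /= mevalM mevalC /xmon rmorph_prod; congr (_ * _); apply: eq_bigr => l _; rewrite /= mevalXU.
Qed.

Lemma part2b (c : {set 'I_n} -> 'F_2) :
  fits s t i (boolfun c) <->
  exists g : {mpoly 'F_2[n]},
    forall S : {set 'I_n}, c S = red (fpol 'F_2 s t i + g * ppol 'F_2 s) S.
Proof.
split => [Hf|[g Hg]].
  exists (hpol c - fpol 'F_2 s t i) => S.
  apply: (factU (A := 'F_2)) => T.
  rewrite -[LHS]/(boolfun c (fun l => (l \in T)%:R)) -evalE_F2.
  set y := fun l => _.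
  rewrite -hpol_val mevalD mevalM mevalB hpol_val fF2 pF2.
  case: (boolP [exists j, isdat s y j]) => [/existsP[j /isdat_eq ->]|Hn].
    by rewrite pval_s mulr0 addr0 fval_s Hf.
  by rewrite pval_nd // mulr1 addrC subrK.
move=> j; rewrite /boolfun.
under eq_bigr do rewrite Hg.
by rewrite -evalE_F2 mevalD mevalM fF2 pF2 pval_s mulr0 addr0 fval_s.
Qed.

End Data.

Lemma emb_inj (K : fieldType) (a b : 'F_2) : emb2 K a = emb2 K b -> a = b.
Proof.
case: (F2c a) => ->; case: (F2c b) => -> //; rewrite emb0 emb1 => /eqP;
  by rewrite ?oner_eq0 // eq_sym oner_eq0.
Qed.

Lemma emb_nat (A : comNzRingType) (bb : bool) : emb2 A (bb%:R) = bb%:R.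
Proof. by case: bb. Qed.

Section MainS.
Variables (K : closedFieldType) (hK : 2%N \in [pchar K]).
Variables (n r : nat) (s t : 'I_r -> 'I_n -> 'F_2) (hs : injective s) (i : 'I_n).

Let h2K : 2%:R = 0 :> K := pcharf0 hK.

Lemma Phi_eval P b : (Phi s t i P).@[b] = P.@[fun k => (Wpol K s t i k).@[b]].
Proof. by rewrite /Phi comp_mpoly_meval; apply: meval_eq => k; rewrite tnth_mktuple. Qed.

Lemma part1 (P : {mpoly K[Nsub n]}) :
  Phi s t i P = 0 <-> (forall b : 'I_(Nsub n) -> K, P.@[fun k => (Wpol K s t i k).@[b]] = 0).
Proof.
split => [H b|H]; first by rewrite -Phi_eval H meval0.
by apply: mpoly_zero => b; rewrite Phi_eval.
Qed.

Lemma sidxK (S : {set 'I_n}) : sval_of (sidx S) = S.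
Proof. exact: enum_rankK. Qed.

Lemma W_val (b : 'I_(Nsub n) -> K) (y : 'I_n -> 'F_2) :
  \sum_(S : {set 'I_n}) (Wpol K s t i (sidx S)).@[b] * \prod_(l in S) emb2 K (y l)
  = emb2 K (fval s t i y)
    + (\sum_(H : {set 'I_n}) b (sidx H) * \prod_(l in H) emb2 K (y l)) * emb2 K (pval s y).
Proof.
rewrite /Wpol.
under eq_bigr do rewrite sidxK.
rewrite -(factE (meval b)) ?rmorphD ?rmorphM /=; last by move=> l; apply: emb_idem.
rewrite (f_val s t i (meval b) h2K) (p_val s (meval b) h2K); congr (_ + _ * _).
rewrite /gpol rmorph_sum; apply: eq_bigr => H _.
rewrite rmorphM /= xmon_val; congr (_ * _).
rewrite mmapC; change (meval b 'X_(sidx H) = b (sidx H)); exact: mevalXU.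
Qed.


Lemma part2a_to (c : {set 'I_n} -> 'F_2) :
  (forall P : {mpoly K[Nsub n]}, Phi s t i P = 0 ->
         P.@[fun k => emb2 K (c (sval_of k))] = 0) -> fits s t i (boolfun c).
Proof.
move=> Hk j.
pose Pj : {mpoly K[Nsub n]} :=
  \sum_(S : {set 'I_n}) (\prod_(l in S) emb2 K (s j l)) *: 'X_(sidx S) - (emb2 K (t j i))%:MP.
have Pv v : Pj.@[v] = \sum_(S : {set 'I_n}) v (sidx S) * \prod_(l in S) emb2 K (s j l) - emb2 K (t j i).
  rewrite /Pj rmorphB rmorph_sum /= mevalC; congr (_ - _); apply: eq_bigr => S _.
  by rewrite mevalZ mevalXU mulrC.
have := Hk Pj; rewrite Pv.
under eq_bigr do rewrite sidxK.
have -> : Phi s t i Pj = 0.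
  apply/part1 => b; rewrite Pv W_val (fval_s t hs) (pval_s hs) emb0 mulr0 addr0 subrr //.
move=> /(_ erefl) /eqP; rewrite subr_eq0 => /eqP H.
apply: (emb_inj (K := K)); rewrite -H -embmE /boolfun rmorph_sum; apply: eq_bigr => S _.
by rewrite rmorphM rmorph_prod mulrC.
Qed.

Lemma part2a_from (c : {set 'I_n} -> 'F_2) :
  fits s t i (boolfun c) ->
  (forall P : {mpoly K[Nsub n]}, Phi s t i P = 0 ->
         P.@[fun k => emb2 K (c (sval_of k))] = 0).
Proof.
move=> /(part2b t hs) [g Hg] P HP.
pose b := fun k => emb2 K (red g (sval_of k)).
have HW : forall S, (Wpol K s t i (sidx S)).@[b] = emb2 K (c S).
  apply: factU => T.
  pose y := fun l => ((l \in T)%:R : 'F_2).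
  have Ey S : \prod_(l in S) ((l \in T)%:R : K) = \prod_(l in S) emb2 K (y l).
    by apply: eq_bigr => l _; rewrite /y emb_nat.
  under eq_bigr do rewrite Ey. under [RHS]eq_bigr do rewrite Ey.
  rewrite W_val.
  have -> : \sum_S emb2 K (c S) * \prod_(l in S) emb2 K (y l) = embm h2K (boolfun c y).
    rewrite /boolfun rmorph_sum; apply: eq_bigr => S _; by rewrite rmorphM rmorph_prod.
  have -> : \sum_H b (sidx H) * \prod_(l in H) emb2 K (y l) = embm h2K (g.@[y]).
    rewrite evalE_F2 rmorph_sum; apply: eq_bigr => S _; by rewrite rmorphM rmorph_prod /b sidxK.
  have -> : boolfun c y = (fpol 'F_2 s t i + g * ppol 'F_2 s).@[y].
    by rewrite evalE_F2 /boolfun; apply: eq_bigr => S _; rewrite Hg.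
  by rewrite mevalD mevalM (fF2 s) pF2 rmorphD rmorphM.
have := (proj1 (part1 P) HP b).
rewrite (@meval_eq _ _ (fun k => emb2 K (c (sval_of k))) (fun k => (Wpol K s t i k).@[b])) //.
by move=> k; have := HW (sval_of k); rewrite /sidx /sval_of enum_valK => ->.
Qed.

End MainS.

Theorem mainTheorem1 (K : closedFieldType) (hK : 2%N \in [pchar K])
  (n r : nat) (hn : (0 < n)%N) (hr : (0 < r)%N)
  (s t : 'I_r -> 'I_n -> 'F_2) (hs : injective s) (i : 'I_n) :
  (forall P : {mpoly K[Nsub n]},
     Phi s t i P = 0 <->
     (forall b : 'I_(Nsub n) -> K, P.@[fun k => (Wpol K s t i k).@[b]] = 0))
  /\
  (forall c : {set 'I_n} -> 'F_2,
     ((forall P : {mpoly K[Nsub n]}, Phi s t i P = 0 ->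
         P.@[fun k => emb2 K (c (sval_of k))] = 0)
      <-> fits s t i (boolfun c))
     /\
     (fits s t i (boolfun c) <->
      exists g : {mpoly 'F_2[n]},
        forall S : {set 'I_n}, c S = red (fpol 'F_2 s t i + g * ppol 'F_2 s) S)).
Proof.
split; first exact: part1.
move=> c; split; last exact: part2b.
split; [exact: part2a_to | exact: part2a_from].
Qed.
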